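(* Let $X$ be a connected graph. Then there exists a constant $C_X$ such that every connected $X$-free graph $G$ (of order at least $3$) satisfies $rx_3(G)\leq sdiam_3(G)+C_X$ if and only if $X=P_3$.
   Context: All graphs are finite, simple, undirected. An edge-coloring of $G$ assigns colors to edges (adjacent edges may share a color). A tree in an edge-colored graph is rainbow if no two of its edges have the same color. For $S\subseteq V(G)$, an $S$-tree is a tree in $G$ containing all vertices of $S$. A $k$-rainbow coloring of a connected graph $G$ is an edge-coloring such that for every set $S$ of $k$ vertices there is a rainbow $S$-tree; $rx_k(G)$, the $k$-rainbow index, is the minimum number of colors in a $k$-rainbow coloring of $G$ (defined for connected $G$ with at least $k$ vertices). The Steiner distance $d(S)$ of $S\subseteq V(G)$ is the minimum number of edges of an $S$-tree; the $k$-Steiner diameter $sdiam_k(G)$ is the maximum of $d(S)$ over all $k$-element $S\subseteq V(G)$. For a family $\mathcal{F}$ of graphs, $G$ is $\mathcal{F}$-free if $G$ contains no induced subgraph isomorphic to a member of $\mathcal{F}$; $X$-free means $\{X\}$-free. $P_n$ is the path on $n$ vertices. *)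

(* Defs.v *)
From Stdlib Require Import ClassicalEpsilon.
From HB Require Import structures.
From mathcomp Require Import all_boot.

Set Implicit Arguments.
Unset Strict Implicit.
Unset Printing Implicit Defensive.

Definition simple_graph (T : finType) (e : rel T) : Prop :=
  symmetric e /\ irreflexive e.

Definition connected_graph (T : finType) (e : rel T) : Prop :=
  forall x y : T, connect e x y.

Definition is_tree_in (T : finType) (e : rel T) (V : {set T}) (F : rel T) : Prop :=
  [/\ (forall x y, F x y -> e x y /\ F y x),
      (forall x y, F x y -> x \in V),
      (forall x y, x \in V -> y \in V -> connect F x y),
      V != set0 &
      ~ (exists p : seq T, [/\ 2 < size p, uniq p & cycle F p])].

Definition S_tree (T : finType) (e : rel T) (S : {set T}) (V : {set T}) (F : rel T) : Prop :=
  is_tree_in e V F /\ S \subset V.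

Definition num_edges (T : finType) (F : rel T) : nat :=
  #|[set [set p.1; p.2] | p in [set q : T * T | F q.1 q.2]]|.

Definition edge_coloring (T : finType) (e : rel T) (N : nat) (c : T -> T -> nat) : Prop :=
  forall x y, e x y -> c x y = c y x /\ c x y < N.

Definition rainbow (T : finType) (c : T -> T -> nat) (F : rel T) : Prop :=
  forall x y u v, F x y -> F u v -> c x y = c u v -> [set x; y] = [set u; v].

Definition k_rainbow_coloring (T : finType) (e : rel T) (k : nat) (c : T -> T -> nat) : Prop :=
  forall S : {set T}, #|S| = k ->
    exists (V : {set T}) (F : rel T), S_tree e S V F /\ rainbow c F.

Definition least (P : nat -> Prop) : nat :=
  epsilon (inhabits 0%N) (fun n => P n /\ forall m, P m -> n <= m).

Definition rainbow_index (T : finType) (e : rel T) (k : nat) : nat :=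
  least (fun N => exists c, edge_coloring e N c /\ k_rainbow_coloring e k c).

Definition steiner_dist (T : finType) (e : rel T) (S : {set T}) : nat :=
  least (fun n => exists (V : {set T}) (F : rel T), S_tree e S V F /\ num_edges F = n).

Definition steiner_diam (T : finType) (e : rel T) (k : nat) : nat :=
  \max_(S : {set T} | #|S| == k) steiner_dist e S.

Definition contains_induced (TX : finType) (eX : rel TX) (T : finType) (e : rel T) : Prop :=
  exists f : TX -> T, injective f /\ forall a b, e (f a) (f b) = eX a b.

Definition X_free (TX : finType) (eX : rel TX) (T : finType) (e : rel T) : Prop :=
  ~ contains_induced eX e.

Definition path_graph (n : nat) : rel 'I_n :=
  fun i j => (i.+1 == j :> nat) || (j.+1 == i :> nat).

Definition isomorphic (T1 : finType) (e1 : rel T1) (T2 : finType) (e2 : rel T2) : Prop :=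
  exists f : T1 -> T2, bijective f /\ forall a b, e2 (f a) (f b) = e1 a b.
Arguments path_graph n : clear implicits.

(* Main.v *)
Require Import Defs.
From HB Require Import structures.
From mathcomp Require Import all_boot.
From Stdlib Require Import Classical ClassicalEpsilon.

Set Implicit Arguments.
Unset Strict Implicit.
Unset Printing Implicit Defensive.


Lemma least_ex (P : nat -> Prop) m : P m -> exists n, P n /\ forall k, P k -> n <= k.
Proof.
elim: m {-2}m (leqnn m) => [|M IH] m Hm Pm.
  exists m; split => // k _; move: Hm; rewrite leqn0 => /eqP ->.
  by [].
destruct (classic (exists k, k < m /\ P k)) as [[k [Hk Pk]]|Hno].
  by apply: (IH k) => //; rewrite -ltnS; apply: leq_trans Hk Hm.
exists m; split => // k Pk; rewrite leqNgt; apply/negP => Hk.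
by apply: Hno; exists k.
Qed.

Lemma least_spec (P : nat -> Prop) m : P m -> P (least P) /\ forall k, P k -> least P <= k.
Proof.
move=> Pm; rewrite /least.
by apply: (epsilon_spec (inhabits 0) (fun n => P n /\ forall m, P m -> n <= m)); apply: least_ex Pm.
Qed.

Lemma least_le (P : nat -> Prop) m : P m -> least P <= m.
Proof. by move=> Pm; apply: (proj2 (least_spec Pm)). Qed.

Section G.
Variables (T : finType) (e : rel T).

Lemma connect_nb (F : rel T) x y : connect F x y -> x != y -> exists z, F x z.
Proof.
move=> /connectP [[|z p] /= Hp ->]; first by rewrite eqxx.
by case/andP: Hp => Hz _ _; exists z.
Qed.

Lemma seq_argmax (r : T -> nat) (p : seq T) : p != [::] ->
  exists2 m, m \in p & forall x, x \in p -> r x <= r m.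
Proof.
elim: p => [//|a p IH] _.
case: p IH => [|b p] IH.
  by exists a; rewrite ?inE // => x; rewrite inE => /eqP ->.
have [m mp Hm] := IH isT.
case: (leqP (r a) (r m)) => Ham.
  exists m; first by rewrite inE mp orbT.
  by move=> x; rewrite inE => /orP [/eqP ->|/Hm].
exists a; first by rewrite inE eqxx.
move=> x; rewrite inE => /orP [/eqP ->//|/Hm H]; apply: leq_trans H (ltnW Ham).
Qed.

Lemma tree_of_rank (V : {set T}) (F : rel T) (r : T -> nat) root :
  (forall x y, F x y -> e x y /\ F y x) ->
  (forall x y, F x y -> x \in V) ->
  root \in V -> (forall x, x \in V -> connect F x root) ->
  (forall x y, F x y -> r x != r y) ->
  (forall x y z, F x y -> F x z -> r y < r x -> r z < r x -> y = z) ->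
  is_tree_in e V F.
Proof.
move=> HF HV rV Hc Hr Hu.
have Fsym : symmetric F by move=> x y; apply/idP/idP => /HF [].
split => //.
- move=> x y xV yV; apply: connect_trans (Hc _ xV) _.
  by rewrite (sym_connect_sym Fsym); apply: Hc.
- by apply/set0Pn; exists root.
case=> p [sp up cp].
have [|m mp Hm] := seq_argmax r (p := p); first by case: p sp {up cp}.
case: (rot_to mp) => i q Hq.
have : uniq (m :: q) by rewrite -Hq rot_uniq.
have : cycle F (m :: q) by rewrite -Hq rot_cycle.
have : size (m :: q) > 2 by rewrite -Hq size_rot.
have qp : forall x, x \in q -> x \in p.
  by move=> x xq; rewrite -(mem_rot i) Hq inE xq orbT.
case: q Hq qp => [|x q] // Hq qp.
case: q Hq qp => [|y0 q] // Hq qp _.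
rewrite /= rcons_path => /andP [Fmx /andP [_ Flast]].
set y := last y0 q in Flast.
have yq : y \in y0 :: q by rewrite /y mem_last.
move=> Hu0; have xq : x \notin y0 :: q by move: Hu0; rewrite /= => /andP [_ /andP [-> _]].
have xp : x \in p by apply: qp; rewrite inE eqxx.
have yp : y \in p by apply: qp; rewrite inE yq orbT.
case/andP: Flast => _ Flast. have Fmy : F m y by rewrite Fsym.
have rx : r x < r m by rewrite ltn_neqAle eq_sym Hr ?Hm.
have ry : r y < r m by rewrite ltn_neqAle eq_sym Hr ?Hm.
have := Hu _ _ _ Fmx Fmy rx ry => Exy.
by move: xq; rewrite Exy yq.
Qed.

Lemma num_edges_le (V : {set T}) (F : rel T) :
  (forall x y, F x y -> x \in V /\ y \in V) -> num_edges F <= #|V| * #|V|.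
Proof.
move=> HV; rewrite /num_edges -cardsX.
apply: leq_trans (leq_imset_card _ _) _.
apply: subset_leq_card; apply/subsetP => q; rewrite !inE => /HV [-> ->] //.
Qed.

Lemma sdiam_le k :
  (forall S : {set T}, #|S| = 3 -> exists V F, S_tree e S V F /\ #|V| <= k) ->
  steiner_diam e 3 <= k * k.
Proof.
move=> H; rewrite /steiner_diam; apply/bigmax_leqP => S /eqP /H [V [F [St Vk]]].
have HV : forall x y, F x y -> x \in V /\ y \in V.
  case: St => [[H1 H2 _ _ _] _] x y Fxy; split; first by apply: H2 Fxy.
  by apply: (H2 y x); case: (H1 _ _ Fxy).
apply: leq_trans (least_le (m := num_edges F) _) _.
  by exists V, F.
apply: leq_trans (num_edges_le HV) _; exact: leq_mul.
Qed.

Lemma coloring_ex :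
  (forall S : {set T}, #|S| = 3 -> exists V F, S_tree e S V F) ->
  exists N c, edge_coloring e N c /\ k_rainbow_coloring e 3 c.
Proof.
move=> H; exists #|{: {set T}}|, (fun x y => nat_of_ord (enum_rank [set x; y])); split.
  by move=> x y _; rewrite setUC; split => //.
move=> S /H [V [F St]]; exists V, F; split => // x y u v _ _ /val_inj /enum_rank_inj.
by [].
Qed.

End G.


Lemma card3set (T : finType) (a b c : T) : a != b -> a != c -> b != c ->
  #|[set a; b; c]| = 3.
Proof.
move=> ab ac bc; rewrite -setUA cardsU1 cards2 bc !inE negb_or ab ac.
by [].
Qed.

Lemma pick3 (T : finType) (A : {set T}) : 2 < #|A| ->
  exists a b c, [/\ a \in A, b \in A, c \in A & [/\ a != b, a != c & b != c]].
Proof.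
move=> H.
have /set0Pn [a aA] : A != set0 by rewrite -card_gt0; apply: leq_trans H.
have H1 : 1 < #|A :\ a| by rewrite (cardsD1 a A) aA in H.
have /set0Pn [b] : A :\ a != set0 by rewrite -card_gt0; apply: leq_trans H1.
rewrite !inE => /andP [ba bA].
have H2 : 0 < #|A :\ a :\ b| by rewrite (cardsD1 b (A :\ a)) !inE ba bA in H1.
have /set0Pn [c] : A :\ a :\ b != set0 by rewrite -card_gt0.
rewrite !inE => /and3P [cb ca cA].
by exists a, b, c; split => //; split; rewrite // eq_sym.
Qed.

Lemma card3 (T : finType) (S : {set T}) : #|S| = 3 ->
  exists a b c, [/\ a != b, a != c, b != c & S = [set a; b; c]].
Proof.
move=> H; have [a [b [c [aS bS cS [ab ac bc]]]]] := pick3 (A := S) (ltac:(by rewrite H)).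
exists a, b, c; split => //; apply/esym/eqP; rewrite eqEcard H card3set // andbT.
by apply/subsetP => x; rewrite !inE => /orP [/orP [] |] /eqP ->.
Qed.

Lemma pick_other (T : finType) (i j : T) : 2 < #|T| -> exists k, k != i /\ k != j.
Proof.
move=> H.
have : ~~ ([set: T] \subset [set i; j]).
  apply/negP => /subset_leq_card; rewrite cardsT cards2.
  by case: (i != j) H => /= H1 H2; move: (leq_trans H1 H2).
case/subsetPn => k _; rewrite !inE negb_or => /andP [ki kj].
by exists k.
Qed.

Section G.
Variables (T : finType) (e : rel T).

Lemma rx_lower n (leaf hub : 'I_n -> T) : 2 < n -> injective leaf ->
  (forall i j, leaf i != hub j) -> (forall i, e (leaf i) (hub i)) ->
  (forall i y, e (leaf i) y -> y = hub i) ->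
  forall N c, edge_coloring e N c -> k_rainbow_coloring e 3 c -> n <= N.
Proof.
move=> n3 linj lh ehub uhub N c col rb.
have key : forall i j, i != j -> c (leaf i) (hub i) != c (leaf j) (hub j).
  move=> i j ij.
  have [k [ki kj]] := pick_other i j (ltac:(by rewrite card_ord)).
  have li : leaf i != leaf j by apply: contra ij => /eqP /linj ->.
  have lk1 : leaf i != leaf k by apply: contra ki => /eqP /linj ->; rewrite eqxx.
  have lk2 : leaf j != leaf k by apply: contra kj => /eqP /linj ->; rewrite eqxx.
  have [V [F [[[HF HV Hc _ _] SV] Hrb]]] := rb _ (card3set li lk1 lk2).
  have inV : forall x, x \in [set leaf i; leaf j; leaf k] -> x \in V by apply/subsetP.
  have getF : forall a b, leaf a \in V -> leaf b \in V -> a != b -> F (leaf a) (hub a).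
    move=> a b aV bV ab.
    have [z Fz] := connect_nb (Hc _ _ aV bV) (ltac:(by apply: contra ab => /eqP /linj ->)).
    by rewrite -(uhub _ _ (proj1 (HF _ _ Fz))).
  have iV : leaf i \in V by apply: inV; rewrite !inE eqxx.
  have jV : leaf j \in V by apply: inV; rewrite !inE eqxx !orbT.
  have Fi := getF _ _ iV jV ij.
  have Fj := getF _ _ jV iV (ltac:(by rewrite eq_sym)).
  apply/negP => /eqP E; have := Hrb _ _ _ _ Fi Fj E.
  move/setP => /(_ (leaf i)); rewrite !inE eqxx /= (negbTE li) /= => /esym /eqP E2.
  by move: (lh i j); rewrite E2 eqxx.
have lt : forall i, c (leaf i) (hub i) < N by move=> i; case: (col _ _ (ehub i)).
pose g (i : 'I_n) : 'I_N := Ordinal (lt i).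
have ginj : injective g.
  move=> i j /(congr1 val) /= E; apply/eqP; apply: contraT => ij.
  by move: (key _ _ ij); rewrite E eqxx.
by have := leq_card _ ginj; rewrite !card_ord.
Qed.

End G.


Lemma rx_ge (T : finType) (e : rel T) n (leaf hub : 'I_n -> T) :
  (forall S : {set T}, #|S| = 3 -> exists V F, S_tree e S V F) ->
  2 < n -> injective leaf ->
  (forall i j, leaf i != hub j) -> (forall i, e (leaf i) (hub i)) ->
  (forall i y, e (leaf i) y -> y = hub i) -> n <= rainbow_index e 3.
Proof.
move=> Htr n3 linj lh eh uh.
have [N [c Hc]] := coloring_ex Htr.
have [[c' [col rb]] _] := least_spec (P := fun N => exists c, edge_coloring e N c /\ k_rainbow_coloring e 3 c) (ex_intro _ c Hc).
have := rx_lower n3 linj lh eh uh col rb. by [].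
Qed.

Definition starg n : rel (option 'I_n) := fun x y => (x == None) != (y == None).
Arguments starg n : clear implicits.

Lemma starg_simple n : simple_graph (starg n).
Proof. by split; [move=> x y; rewrite /starg eq_sym | move=> x; rewrite /starg eqxx]. Qed.

Lemma starg_conn n : connected_graph (starg n).
Proof.
have H : forall x, connect (starg n) x None.
  by case=> [i|//]; apply: connect1.
move=> x y; apply: connect_trans (H x) _.
rewrite (sym_connect_sym (fun a b => (proj1 (starg_simple n)) a b)); exact: H.
Qed.

Lemma starg_trees n (S : {set option 'I_n}) : #|S| = 3 ->
  exists V F, S_tree (starg n) S V F /\ #|V| <= 4.
Proof.
move=> HS; set V := None |: S.
exists V, (fun x y => [&& starg n x y, x \in V & y \in V]); split; last first.
  by rewrite cardsU1 HS; case: (None \notin S).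
split; last by apply/subsetP => x xS; rewrite !inE xS orbT.
apply: (tree_of_rank (r := fun x => if x is None then 0 else 1) (root := None)).
- move=> x y /and3P [Exy xV yV]; split => //; rewrite /starg eq_sym in Exy.
  by rewrite /= /starg Exy xV yV.
- by move=> x y /and3P [].
- by rewrite !inE eqxx.
- move=> x xV; case: x xV => [i|//] iV; apply: connect1.
  by rewrite /= iV !inE eqxx.
- by move=> [i|] [j|] /and3P [].
- by move=> [i|] [j|] [k|] //= /and3P [] //.
Qed.

Lemma starg_sdiam n : steiner_diam (starg n) 3 <= 16.
Proof. by apply: (sdiam_le (k := 4)) => S /starg_trees. Qed.

Lemma starg_rx n : 2 < n -> n <= rainbow_index (starg n) 3.
Proof.
move=> n3; apply: (rx_ge (leaf := fun i => Some i) (hub := fun _ => None)) => //.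
- by move=> S /starg_trees [V [F [H _]]]; exists V, F.
- by move=> i j [].
- by move=> i [j|].
Qed.

Definition Hg n : rel ('I_n + 'I_n)%type := fun x y =>
  match x, y with
  | inl i, inl j => i != j
  | inl i, inr j => i == j
  | inr i, inl j => i == j
  | inr _, inr _ => false
  end.
Arguments Hg n : clear implicits.

Lemma Hg_simple n : simple_graph (Hg n).
Proof.
split; last by case=> i /=; rewrite ?eqxx.
by case=> i [] j /=; rewrite // eq_sym.
Qed.

Lemma Hg_conn n : 0 < n -> connected_graph (Hg n).
Proof.
move=> n0; pose r0 : 'I_n := Ordinal n0.
have Hl : forall i, connect (Hg n) (inl i) (inl r0).
  move=> i; case: (eqVneq i r0) => [->//|ir]; exact: connect1.
have H : forall x, connect (Hg n) x (inl r0).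
  case=> [i|i]; first exact: Hl.
  apply: connect_trans (Hl i); apply: connect1; by rewrite /= eqxx.
move=> x y; apply: connect_trans (H x) _.
rewrite (sym_connect_sym (fun a b => (proj1 (Hg_simple n)) a b)); exact: H.
Qed.

Definition Htedge n (r0 : 'I_n) : rel ('I_n + 'I_n)%type := fun x y =>
  match x, y with
  | inl i, inl j => (i == r0) != (j == r0)
  | inl i, inr j => i == j
  | inr i, inl j => i == j
  | inr _, inr _ => false
  end.

Lemma Hg_trees n (S : {set ('I_n + 'I_n)%type}) : 0 < n -> #|S| = 3 ->
  exists V F, S_tree (Hg n) S V F /\ #|V| <= 7.
Proof.
move=> n0 HS; pose r0 : 'I_n := Ordinal n0.
pose hubs := [set x : ('I_n + 'I_n)%type | if x is inl i then inr i \in S else false].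
pose hf (x : ('I_n + 'I_n)%type) := if x is inr i then inl i else x.
have hubsS : hubs \subset hf @: S.
  apply/subsetP => [[i|i]]; rewrite !inE // => iS.
  by apply/imsetP; exists (inr i).
set V := inl r0 |: (S :|: hubs).
exists V, (fun x y => [&& Htedge r0 x y, x \in V & y \in V]); split.
  split; last by apply/subsetP => x xS; rewrite !inE xS orbT.
  apply: (tree_of_rank (r := fun x => if x is inl i then (if i == r0 then 0 else 1) else 2) (root := inl r0)).
  - move=> x y /and3P [Exy xV yV]; rewrite /= xV yV andbT.
    case: x y Exy {xV yV} => [i|i] [j|j] //=.
      move=> H; rewrite andbT; split; last by rewrite (eq_sym (j == r0)) H.
      by apply: contraTneq H => ->; rewrite eqxx.
    by move=> /eqP ->; rewrite eqxx.
    by move=> /eqP ->; rewrite eqxx.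
  - by move=> x y /and3P [].
  - by rewrite !inE eqxx.
  - have Hl : forall i, inl i \in V -> connect (fun x y => [&& Htedge r0 x y, x \in V & y \in V]) (inl i) (inl r0).
      move=> i iV; case: (eqVneq i r0) => [->//|ir]; apply: connect1.
      by rewrite /= (negbTE ir) eqxx iV !inE eqxx.
    case=> [i|i] xV; first exact: Hl.
    have iS : inr i \in S by move: xV; rewrite !inE /= ?orbF.
    have lV : inl i \in V by rewrite !inE iS !orbT.
    apply: connect_trans (Hl _ lV); apply: connect1.
    by rewrite /= eqxx xV lV.
  - move=> [i|i] [j|j] /and3P [] //=.
      by case: (i == r0); case: (j == r0).
    by case: (i == r0).
    by case: (j == r0).
  - move=> [i|i] [j|j] [k|k] /and3P [] //= + _ _ /and3P [] + _ _.
    + by case: (eqVneq i r0) => //= _ _ _; case: (eqVneq j r0) => [->|] //=; case: (eqVneq k r0) => [->|] //=.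
    + by case: (i == r0).
    + by case: (i == r0).
    + by case: (i == r0).
    + by move=> /eqP <- /eqP <-.
have h3 : #|hubs| <= 3 by rewrite -HS; apply: leq_trans (subset_leq_card hubsS) (leq_imset_card _ _).
rewrite cardsU1; apply: (@leq_trans (1 + 6)); last by [].
apply: leq_add; first by case: (_ \notin _).
rewrite cardsU HS; apply: leq_trans (leq_subr _ _) _.
by rewrite (_ : 6 = 3 + 3) // leq_add2l.
Qed.


Lemma Hg_sdiam n : 0 < n -> steiner_diam (Hg n) 3 <= 49.
Proof. by move=> n0; apply: (sdiam_le (k := 7)) => S /(Hg_trees n0). Qed.

Lemma Hg_rx n : 2 < n -> n <= rainbow_index (Hg n) 3.
Proof.
move=> n3; have n0 : 0 < n by apply: leq_trans n3.
apply: (rx_ge (leaf := fun i => inr i) (hub := fun i => inl i)) => //.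
- by move=> S /(Hg_trees n0) [V [F [H _]]]; exists V, F.
- by move=> i j [].
- by move=> i /=.
- by move=> i [j|j] //= /eqP ->.
Qed.

Lemma Hg_clawfree n : ~ contains_induced (starg 3) (Hg n).
Proof.
case=> g [ginj Hg'].
have nb : forall k, Hg n (g None) (g (Some k)) by move=> k; rewrite Hg'.
have na : forall k l, k != l -> Hg n (g (Some k)) (g (Some l)) = false.
  by move=> k l _; rewrite Hg'.
have neq : forall k l : 'I_3, k != l -> g (Some k) != g (Some l).
  by move=> k l kl; apply: contra kl => /eqP /ginj [] ->.
have kind : forall k l : 'I_3, k != l -> is_inl (g (Some k)) != is_inl (g (Some l)).
  move=> k l kl; have := nb k; have := nb l; have := na k l kl; have := neq k l kl.
  case: (g None) => [c|c]; case: (g (Some k)) => [a|a]; case: (g (Some l)) => [b|b] //=.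
  - by move=> ab /negbFE /eqP abe; rewrite abe eqxx in ab.
  - by move=> ab _ /eqP cb /eqP ca; rewrite -ca -cb eqxx in ab.
  - by move=> ab /negbFE /eqP abe; rewrite abe eqxx in ab.
have k01 := kind (@Ordinal 3 0 isT) (@Ordinal 3 1 isT) isT.
have k02 := kind (@Ordinal 3 0 isT) (@Ordinal 3 2 isT) isT.
have k12 := kind (@Ordinal 3 1 isT) (@Ordinal 3 2 isT) isT.
move: k01 k02 k12.
by case: (is_inl _); case: (is_inl _); case: (is_inl _).
Qed.


Section G.
Variables (T : finType) (e : rel T).

Lemma p3free_complete : simple_graph e -> connected_graph e ->
  X_free (path_graph 3) e -> forall x y, x != y -> e x y.
Proof.
move=> [esym eirr] econ free.
have P3 : forall x z y, e x z -> e z y -> x != y -> e x y.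
  move=> x z y xz zy xy; apply: contraT => nxy; case: free.
  have xz' : x != z by apply: contraTneq xz => ->; rewrite eirr.
  have zy' : z != y by apply: contraTneq zy => ->; rewrite eirr.
  exists (fun i : 'I_3 => if val i == 0 then x else if val i == 1 then z else y); split.
    move=> [[|[|[|i]]] Hi] [[|[|[|j]]] Hj] //= E; apply: val_inj => //=;
      by move: E xz' zy' xy; rewrite ?E ?eqxx // => ->; rewrite ?eqxx.
  move=> [[|[|[|i]]] Hi] [[|[|[|j]]] Hj] //=; rewrite /path_graph /= ?eirr //.
  - by rewrite (negbTE nxy).
  - by rewrite esym xz.
  - by rewrite esym (negbTE nxy).
  - by rewrite esym zy.
move=> x y xy; have /connectP [p Hp Ey] := econ x y.
suff : forall z, (z == x) || e x z -> path e z p -> (last z p == x) || e x (last z p).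
  have yx : (y == x) = false by apply/negbTE; rewrite eq_sym.
  by move/(_ x); rewrite eqxx -Ey yx => /(_ isT Hp).
elim: p {Hp Ey} => [//|w p IH] z Hz /= /andP [zw Hp]; apply: IH Hp.
case/orP: Hz => [/eqP <-|xz]; first by rewrite zw orbT.
case: (eqVneq w x) => [//|wx] /=.
by apply: P3 xz zw _; rewrite eq_sym.
Qed.

End G.


Section G.
Variables (T : finType) (e : rel T).

Definition pathF (p : seq T) : rel T := fun x y =>
  [&& x \in p, y \in p & (index y p == (index x p).+1) || (index x p == (index y p).+1)].

Lemma pathF_edge (p : seq T) x0 x y : uniq p -> pathF p x y ->
  exists i, [/\ i.+1 < size p, [set x; y] = [set nth x0 p i; nth x0 p i.+1] &
    (x = nth x0 p i /\ y = nth x0 p i.+1) \/ (y = nth x0 p i /\ x = nth x0 p i.+1)].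
Proof.
move=> up /and3P [xp yp /orP [/eqP E|/eqP E]].
  exists (index x p); split; first by rewrite -E index_mem.
    by rewrite -E !nth_index.
  by left; rewrite -E !nth_index.
exists (index y p); split; first by rewrite -E index_mem.
  by rewrite -E !nth_index // setUC.
by right; rewrite -E !nth_index.
Qed.

Lemma path_tree (p : seq T) : uniq p -> p != [::] ->
  (forall x y, x != y -> e x y) -> is_tree_in e [set x in p] (pathF p).
Proof.
case: p => [//|h p'] up _ ecomp; set p := h :: p'.
apply: (tree_of_rank (r := index^~ p) (root := h)).
- move=> x y Fxy; split; last by move: Fxy; rewrite /pathF orbC andbCA.
  apply: ecomp; apply: contraTneq Fxy => ->.
  by rewrite /pathF (ltn_eqF (ltnSn _)) !andbF.
- by move=> x y /and3P [xp _ _]; rewrite inE.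
- by rewrite inE mem_head.
- have H : forall i x, x \in p -> index x p = i -> connect (pathF p) x h.
    elim=> [|i IH] x xp Ei.
      by have := nth_index h xp; rewrite Ei /= => <-.
    have ilt : i < size p by apply: ltnW; rewrite -Ei index_mem.
    have yp : nth h p i \in p by apply: mem_nth.
    apply: connect_trans (IH _ yp (index_uniq h ilt up)).
    by apply: connect1; rewrite /pathF xp yp (index_uniq h ilt up) Ei eqxx orbT.
  by move=> x; rewrite inE => xp; apply: (H _ x xp).
- move=> x y /and3P [_ _ /orP [/eqP ->|/eqP ->]]; first by rewrite neq_ltn ltnSn.
  by rewrite neq_ltn ltnSn orbT.
- move=> x y z /and3P [xp yp Hy] /and3P [_ zp Hz] ry rz.
  have Ey : index x p = (index y p).+1.
    by case/orP: Hy => /eqP E //; rewrite E ltnNge leqnSn in ry.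
  have Ez : index x p = (index z p).+1.
    by case/orP: Hz => /eqP E //; rewrite E ltnNge leqnSn in rz.
  have E : index y p = index z p by apply: succn_inj; rewrite -Ey -Ez.
  by rewrite -(nth_index h yp) E nth_index.
Qed.

Lemma path_rainbow (p : seq T) (c : T -> T -> nat) x0 (L : seq nat) :
  uniq p -> (forall x y, c x y = c y x) ->
  (forall i, i.+1 < size p -> c (nth x0 p i) (nth x0 p i.+1) = nth 0 L i) ->
  uniq L -> (size p).-1 <= size L ->
  rainbow c (pathF p).
Proof.
move=> up csym cL uL sL x y u v Fxy Fuv.
have [i [ilt Ei Hi]] := pathF_edge x0 up Fxy.
have [j [jlt Ej Hj]] := pathF_edge x0 up Fuv.
have ci : c x y = nth 0 L i by case: Hi => [[-> ->]|[-> ->]]; [exact: cL | rewrite csym; exact: cL].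
have cj : c u v = nth 0 L j by case: Hj => [[-> ->]|[-> ->]]; [exact: cL | rewrite csym; exact: cL].
rewrite ci cj Ei Ej => /eqP; rewrite nth_uniq //.
- by move/eqP ->.
- by apply: leq_trans sL; rewrite -ltnS prednK // (leq_trans _ ilt).
- by apply: leq_trans sL; rewrite -ltnS prednK // (leq_trans _ jlt).
Qed.

End G.


Definition col (p q : nat) := if p == q then p else 3 + (p + q) %% 3.

Lemma col_sym p q : col p q = col q p.
Proof. by rewrite /col [p == q]eq_sym; case: (eqVneq q p) => [->//|_]; rewrite [p + q]addnC. Qed.

Lemma col_lt p q : p < 3 -> q < 3 -> col p q < 6.
Proof. by case: p => [|[|[|]]] //; case: q => [|[|[|]]]. Qed.

Lemma col_neq p q r : p < 3 -> q < 3 -> r < 3 ->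
  ~~ ((p == r) && (p != q)) -> ~~ ((p == q) && (q == r)) -> col p q != col q r.
Proof.
by case: p => [|[|[|]]] //; case: q => [|[|[|]]] //; case: r => [|[|[|]]].
Qed.

Section G.
Variables (T : finType) (e : rel T).

Lemma complete_rx : (forall x y, x != y -> e x y) -> 2 < #|T| ->
  rainbow_index e 3 <= 6.
Proof.
move=> ecomp T3.
have [t0 [t1 [t2 [_ _ _ [_ _ t12]]]]] := pick3 (A := [set: T]) (ltac:(by rewrite cardsT)).
pose cls x := if x == t1 then 1 else if x == t2 then 2 else 0.
have cls3 : forall x, cls x < 3 by move=> x; rewrite /cls; case: (x == t1); case: (x == t2).
have cls1 : forall x, cls x = 1 -> x = t1.
  by move=> x; rewrite /cls; case: eqP => // _; case: eqP.
have cls2 : forall x, cls x = 2 -> x = t2.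
  by move=> x; rewrite /cls; case: eqP => // _; case: eqP.
have clst1 : cls t1 = 1 by rewrite /cls eqxx.
have clst2 : cls t2 = 2 by rewrite /cls eqxx eq_sym (negbTE t12).
pose c x y := col (cls x) (cls y).
apply: (least_le (P := fun N => exists c, edge_coloring e N c /\ k_rainbow_coloring e 3 c)).
exists c; split.
  by move=> x y _; split; [exact: col_sym | exact: col_lt].
move=> S /card3 [a [b [d [ab ad bd ->]]]].
have csym : forall x y, c x y = c y x by move=> x y; exact: col_sym.
have mk : forall p : seq T, uniq p -> p != [::] -> a \in p -> b \in p -> d \in p ->
    uniq [seq c (nth a p i) (nth a p i.+1) | i <- iota 0 (size p).-1] ->
    exists V F, S_tree e [set a; b; d] V F /\ rainbow c F.
  move=> p up p0 ap bp dp uL; exists [set x in p], (pathF p); split.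
    split; first exact: path_tree.
    by apply/subsetP => x; rewrite !inE => /orP [/orP [] |] /eqP ->.
  apply: (path_rainbow (x0 := a) up csym _ uL); last by rewrite size_map size_iota.
  move=> i ilt; rewrite (nth_map 0); last by rewrite size_iota -ltnS prednK // (leq_trans _ ilt).
  by rewrite nth_iota // -ltnS prednK // (leq_trans _ ilt).
case: (boolP ((cls a == cls d) && (cls a != cls b))) => H1.
  apply: (mk [:: a; d; b]); rewrite /= ?inE ?eqxx ?orbT //.
    by rewrite negb_or ad ab eq_sym bd.
  rewrite andbT; case/andP: H1 => /eqP AD AB; apply: col_neq => //.
    by rewrite AD eqxx andbF.
  by rewrite -AD eqxx.
case: (boolP ((cls a == cls b) && (cls b == cls d))) => H2; last first.
  apply: (mk [:: a; b; d]); rewrite /= ?inE ?eqxx ?orbT //.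
    by rewrite negb_or ab ad bd.
  by rewrite andbT; apply: col_neq.
have ca0 : cls a = 0.
  move: (cls3 a) H2; case E: (cls a) => [|[|[|]]] //.
    by move=> _ /andP [/eqP Eb _]; move: ab; rewrite (cls1 _ E) (cls1 b (esym Eb)) eqxx.
  by move=> _ /andP [/eqP Eb _]; move: ab; rewrite (cls2 _ E) (cls2 b (esym Eb)) eqxx.
case/andP: H2 => /eqP Eb /eqP Ed; rewrite -Eb ca0 in Ed; rewrite ca0 in Eb.
have nt1 : forall x, cls x = 0 -> x != t1 by move=> x Ex; apply: contraTneq isT => E; move: Ex; rewrite E clst1.
have nt2 : forall x, cls x = 0 -> x != t2 by move=> x Ex; apply: contraTneq isT => E; move: Ex; rewrite E clst2.
apply: (mk [:: a; b; t1; t2; d]); rewrite /= ?inE ?eqxx ?orbT //.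
  rewrite !negb_or ab ad bd t12 nt1 ?nt2 //= andbT.
  by rewrite nt1 ?(eq_sym t1) ?nt1 ?(eq_sym t2) ?nt2.
by rewrite /c ca0 -Eb -Ed clst1 clst2.
Qed.

End G.


Lemma induced_trans (T1 T2 T3 : finType) (e1 : rel T1) (e2 : rel T2) (e3 : rel T3) :
  contains_induced e1 e2 -> contains_induced e2 e3 -> contains_induced e1 e3.
Proof.
move=> [f [fi fE]] [g [gi gE]]; exists (g \o f); split; first exact: inj_comp.
by move=> a b /=; rewrite gE fE.
Qed.

Unset Implicit Arguments.

Theorem theorem5 (TX : finType) (eX : rel TX) :
  simple_graph eX -> connected_graph eX -> 3 <= #|TX| ->
  (exists C : nat, forall (T : finType) (e : rel T),
      simple_graph e -> connected_graph e -> 3 <= #|T| -> X_free eX e ->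
      rainbow_index e 3 <= steiner_diam e 3 + C)
  <-> isomorphic eX (path_graph 3).
Proof.
move=> [Xsym Xirr] Xcon X3; split; last first.
  move=> [f [fbij fE]]; exists 6 => T e Gs Gc G3 Gfree.
  have P3free : X_free (path_graph 3) e.
    move=> [g [gi gE]]; apply: Gfree; exists (g \o f); split.
      by apply: inj_comp gi (bij_inj fbij).
    by move=> a b /=; rewrite gE fE.
  have := complete_rx (p3free_complete Gs Gc P3free) G3.
  by move=> H; apply: leq_trans H (leq_addl _ _).
move=> [C HC].
case: (classic (exists m, contains_induced eX (starg m))) => [[m [h [hinj hE]]]|Hno]; last first.
  have n3 : 2 < C + 17 by rewrite addnC.
  have := HC _ _ (@starg_simple (C + 17)) (@starg_conn (C + 17)) (ltac:(by rewrite card_option card_ord ltnW)) (fun H => Hno (ex_intro (fun m => contains_induced eX (starg m)) _ H)).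
  move=> H; have := leq_trans (starg_rx n3) H.
  have := leq_add (@starg_sdiam (C + 17)) (leqnn C).
  move=> H1 H2; have := leq_trans H2 H1.
  by rewrite (addnC 16) leq_add2l.
(* X is star-shaped *)
have [a0 ha0] : exists a0, h a0 = None.
  apply: NNPP => Hn.
  have [x [y [z [_ _ _ [xy _ _]]]]] := pick3 (A := [set: TX]) (ltac:(by rewrite cardsT)).
  have [w Fw] := connect_nb (Xcon x y) xy.
  move: Fw; rewrite -hE /starg.
  case E1: (h x) => [i|]; last by case: Hn; exists x.
  case E2: (h w) => [j|] //; by case: Hn; exists w.
have adj : forall b, b != a0 -> eX a0 b.
  move=> b ba; rewrite -hE ha0 /starg; case E: (h b) => [i|] //.
  by move: ba; rewrite -(hinj _ _ (etrans E (esym ha0))) eqxx.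
have nadj : forall b b', b != a0 -> b' != a0 -> eX b b' = false.
  move=> b b' ba ba'; rewrite -hE /starg.
  case E1: (h b) => [i|]; last by move: ba; rewrite -(hinj _ _ (etrans E1 (esym ha0))) eqxx.
  case E2: (h b') => [j|] //; by move: ba'; rewrite -(hinj _ _ (etrans E2 (esym ha0))) eqxx.
have adj' : forall b, b != a0 -> eX b a0 by move=> b ba; rewrite Xsym adj.
case: (ltnP 3 #|TX|) => X4.
  have [b1 [b2 [b3 [b1i b2i b3i [b12 b13 b23]]]]] := pick3 (A := [set~ a0]) (ltac:(by rewrite cardsC1 -ltnS prednK // (leq_trans _ X4))).
  rewrite !inE in b1i b2i b3i.
  have claw : contains_induced (starg 3) eX.
    exists (fun x : option 'I_3 => match x with None => a0 | Some k => if val k == 0 then b1 else if val k == 1 then b2 else b3 end).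
    split.
      move=> [[[|[|[|k]]] Hk]|] [[[|[|[|l]]] Hl]|] //= E; try (by congr Some; apply: val_inj);
        by move: E b12 b13 b23 b1i b2i b3i; rewrite ?E => ->; rewrite ?eqxx.
    move=> [[[|[|[|k]]] Hk]|] [[[|[|[|l]]] Hl]|] //=; rewrite /starg /= ?Xirr ?adj ?adj' ?nadj //.
  pose n := C + 50.
  have n3 : 2 < n by rewrite /n addnC.
  have := HC _ _ (@Hg_simple n) (@Hg_conn n (ltnW (ltnW n3))) (ltac:(by rewrite card_sum card_ord; apply: leq_trans n3 (leq_addr _ _))) (fun H => Hg_clawfree (induced_trans claw H)).
  move=> H; have := leq_trans (Hg_rx n3) H.
  have := leq_add (@Hg_sdiam n (ltnW (ltnW n3))) (leqnn C).
  move=> H1 H2; have := leq_trans H2 H1.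
  by rewrite /n (addnC 49) leq_add2l.
have X3e : #|[set~ a0]| == 2 by rewrite cardsC1 (_ : #|TX| = 3) //; apply/eqP; rewrite eqn_leq X4 X3.
have [b1 [b2 [b12 Eb]]] := cards2P _ X3e.
have b1i : b1 != a0 by have := set21 b1 b2; rewrite -Eb !inE.
have b2i : b2 != a0 by have := set22 b1 b2; rewrite -Eb !inE.
have all3 : forall x, [|| x == a0, x == b1 | x == b2].
  move=> x; case: (eqVneq x a0) => //= xa; have : x \in [set~ a0] by rewrite !inE.
  by rewrite Eb !inE.
pose f (x : TX) : 'I_3 := if x == a0 then @Ordinal 3 1 isT else if x == b1 then @Ordinal 3 0 isT else @Ordinal 3 2 isT.
have b21 : b2 != b1 by rewrite eq_sym.
have finj : injective f.
  move=> x y; move: (all3 x) (all3 y) => /or3P [] /eqP -> /or3P [] /eqP -> //;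
    rewrite /f ?eqxx ?(negbTE b1i) ?(negbTE b2i) ?(negbTE b12) ?(negbTE b21) //=.
exists f; split.
  by apply: (inj_card_bij finj); rewrite card_ord.
move=> x y; move: (all3 x) (all3 y) => /or3P [] /eqP -> /or3P [] /eqP -> //;
  rewrite /f ?eqxx ?(negbTE b1i) ?(negbTE b2i) ?(negbTE b12) ?(negbTE b21) /path_graph /= ?Xirr ?adj ?adj' ?nadj //.
Qed.
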